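(* Let $A\in GL_n(\mathbb{C})$ with $M_1(A)\in(\frac12,1)$ and let $c\in(M_1(A),1)$. Then $M_1(A_m)<f^{m-1}(c)$ for every $m\geqslant1$.
   Context: For $B\in GL_N(\mathbb{C})$, $M_1(B)$ denotes $\frac1N$ times the algebraic multiplicity of $1$ as an eigenvalue of $B$. Define $A_1=A$ and $A_{m+1}=A_m\otimes A_m$ (Kronecker product), so $A_m\in GL_{n^{2^{m-1}}}(\mathbb{C})$. Let $f:[\frac12,1]\to[\frac12,1]$, $f(x)=x^2+(1-x)^2$, and $f^{m}$ its $m$-fold iterate ($f^0=\mathrm{id}$). *)

(* Defs.v *)
From HB Require Import structures.
From mathcomp Require Import all_boot all_order all_algebra.
Set Implicit Arguments. Unset Strict Implicit. Unset Printing Implicit Defensive.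
Import Order.TTheory GRing.Theory Num.Theory.
Local Open Scope ring_scope.

Lemma kron_pos (m n : nat) (i : 'I_(m * n)) : (0 < n)%N.
Proof. case: n i => [|n] [i] //=; by rewrite muln0. Qed.

Lemma kron_divP (m n : nat) (i : 'I_(m * n)) : (i %/ n < m)%N.
Proof. by rewrite ltn_divLR ?(kron_pos i) // ltn_ord. Qed.

Lemma kron_modP (m n : nat) (i : 'I_(m * n)) : (i %% n < n)%N.
Proof. by rewrite ltn_pmod // (kron_pos i). Qed.

Definition kron_hi (m n : nat) (i : 'I_(m * n)) : 'I_m := Ordinal (kron_divP i).
Definition kron_lo (m n : nat) (i : 'I_(m * n)) : 'I_n := Ordinal (kron_modP i).

(* Kronecker product: (A (x) B)_{(i1,i2),(j1,j2)} = A i1 j1 * B i2 j2,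
   with row index i1 * n2 + i2 (standard convention). *)
Definition kron (R : pzRingType) (m1 n1 m2 n2 : nat)
  (A : 'M[R]_(m1, n1)) (B : 'M[R]_(m2, n2)) : 'M[R]_(m1 * m2, n1 * n2) :=
  \matrix_(i, j) (A (kron_hi i) (kron_hi j) * B (kron_lo i) (kron_lo j)).

Fixpoint kdim (n k : nat) : nat :=
  match k with 0 => n | k'.+1 => (kdim n k' * kdim n k')%N end.

(* kpow A k = A_{k+1} in the paper's notation: A_1 = A, A_{m+1} = A_m (x) A_m. *)
Fixpoint kpow (R : pzRingType) (n : nat) (A : 'M[R]_n) (k : nat) : 'M[R]_(kdim n k) :=
  match k with
  | 0 => A
  | k'.+1 => kron (kpow A k') (kpow A k')
  end.

Definition M1 (R : numClosedFieldType) (N : nat) (B : 'M[R]_N) : R :=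
  (mup 1 (char_poly B))%:R / N%:R.

Definition fmap (R : numClosedFieldType) (x : R) : R := x ^+ 2 + (1 - x) ^+ 2.

(* Main.v *)
Require Import Defs.
From HB Require Import structures.
From mathcomp Require Import all_boot all_order all_algebra.
From mathcomp Require Import mxtens mxred spectral ring.
Import Order.TTheory GRing.Theory Num.Theory.
Local Open Scope ring_scope.
Set Implicit Arguments. Unset Strict Implicit. Unset Printing Implicit Defensive.

Lemma kron_tens (R : pzRingType) m1 n1 m2 n2 (A : 'M[R]_(m1, n1)) (B : 'M[R]_(m2, n2)) :
  kron A B = tensmx A B.
Proof.
apply/matrixP => i j; rewrite !mxE.
by congr (A _ _ * B _ _); apply: val_inj.
Qed.

Lemma kron_mul (R : comPzRingType) m n p q r s
  (A : 'M[R]_(m,n)) (B : 'M[R]_(p,q)) (C : 'M[R]_(n, r)) (D : 'M[R]_(q, s)) :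
  kron A B *m kron C D = kron (A *m C) (B *m D).
Proof. by rewrite !kron_tens tensmx_mul. Qed.

Lemma kron_idx m n (i : 'I_(m * n)) : nat_of_ord i = (nat_of_ord (kron_hi i) * n + nat_of_ord (kron_lo i))%N.
Proof. by rewrite /= -divn_eq. Qed.

Lemma kron1 (R : pzRingType) m n :
  kron (1%:M : 'M[R]_m) (1%:M : 'M[R]_n) = 1%:M.
Proof.
apply/matrixP => i j; rewrite !mxE -natrM mulnb; congr (_%:R); congr (nat_of_bool _).
apply/idP/idP => [/andP[/eqP h1 /eqP h2]|/eqP->]; last by rewrite !eqxx.
apply/eqP.
by apply: val_inj; rewrite /= (kron_idx i) (kron_idx j) h1 h2.
Qed.

Lemma kron_trig (R : pzRingType) m n (A : 'M[R]_m) (B : 'M[R]_n) :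
  is_trig_mx A -> is_trig_mx B -> is_trig_mx (kron A B).
Proof.
move=> /is_trig_mxP hA /is_trig_mxP hB; apply/is_trig_mxP => i j lij.
rewrite mxE.
have hn := kron_pos i.
have le : (kron_hi i <= kron_hi j)%N by rewrite /= leq_div2r // ltnW.
case: (ltngtP (kron_hi i) (kron_hi j)) le => // [lt|eq] _.
  by rewrite hA // mul0r.
rewrite hB ?mulr0 //.
move: lij; rewrite (kron_idx i) (kron_idx j) eq ltn_add2l.
by [].
Qed.

Lemma kpow_mul (R : comPzRingType) n (A B : 'M[R]_n) k :
  kpow (A *m B) k = kpow A k *m kpow B k.
Proof. by elim: k => //= k ->; rewrite kron_mul. Qed.

Lemma kpow1 (R : comPzRingType) n k : kpow (1%:M : 'M[R]_n) k = 1%:M.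
Proof. by elim: k => //= k ->; rewrite kron1. Qed.

Lemma kpow_trig (R : comPzRingType) n (A : 'M[R]_n) k :
  is_trig_mx A -> is_trig_mx (kpow A k).
Proof. by move=> h; elim: k => //= k ih; apply: kron_trig. Qed.

Lemma char_poly_sim (R : comNzRingType) N (U V B : 'M[R]_N) :
  U *m V = 1%:M -> V *m U = 1%:M -> char_poly (U *m B *m V) = char_poly B.
Proof.
move=> UV VU.
have UV' : map_mx (@polyC R) U *m map_mx (@polyC R) V = 1%:M by rewrite -map_mxM UV map_mx1.
have VU' : map_mx (@polyC R) V *m map_mx (@polyC R) U = 1%:M by rewrite -map_mxM VU map_mx1.
have e : char_poly_mx (U *m B *m V) =
  map_mx polyC U *m char_poly_mx B *m map_mx polyC V.
  rewrite /char_poly_mx mulmxBr mulmxBl !map_mxM.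
  by rewrite mul_mx_scalar -scalemxAl -mul_scalar_mx UV' mulmx1.
rewrite /char_poly e !det_mulmx mulrC mulrA -det_mulmx VU' det1 mul1r.
by [].
Qed.

Fixpoint dg (R : pzRingType) n (T : 'M[R]_n) k : 'I_(kdim n k) -> R :=
  match k return 'I_(kdim n k) -> R with
  | 0 => fun i => T i i
  | k'.+1 => fun i => @dg R n T k' (kron_hi i) * @dg R n T k' (kron_lo i)
  end.
Arguments dg {R n} T k i.

Lemma kpow_diag (R : pzRingType) n (T : 'M[R]_n) k i : kpow T k i i = dg T k i.
Proof. by elim: k i => //= k ih i; rewrite mxE !ih. Qed.

Definition cnt (R : pzRingType) N (d : 'I_N -> R) (g : R) : R :=
  \sum_i ((d i == g)%:R).

Lemma M1_trig (R : numClosedFieldType) N (T : 'M[R]_N) :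
  is_trig_mx T -> M1 T = cnt (fun i => T i i) 1 / N%:R.
Proof.
move=> hT; rewrite /M1 char_poly_trig //.
rewrite -(big_map (fun i => T i i) xpredT (fun y => 'X - y%:P)).
rewrite mu_prod_XsubC count_map /cnt -sum1_count natr_sum big_mkcond /=.
by congr (_ / _); apply: eq_bigr => i _; rewrite eq_sym; case: (_ == _).
Qed.

Lemma M1_kpow (R : numClosedFieldType) n (A : 'M[R]_n) : (0 < n)%N -> A \in unitmx ->
  exists T : 'M[R]_n, (forall i, T i i != 0) /\
    forall k, M1 (kpow A k) = cnt (dg T k) 1 / (kdim n k)%:R.
Proof.
move=> n0 hA; have [P Pu hT] := Schur A n0.
have Pun := unitarymx_unit Pu.
move: hT; rewrite /similar_to /conjmx pinvmxE // => hT.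
set T := P *m A *m invmx P in hT.
exists T; split.
  have : \det T != 0.
    by rewrite -unitfE -unitmxE !unitmx_mul hA Pun unitmx_inv Pun.
  rewrite det_trig // => /prodf_neq0 h i; exact: h.
move=> k.
have eA : A = invmx P *m T *m P.
  by rewrite /T !mulmxA mulVmx // mul1mx -mulmxA mulVmx // mulmx1.
clearbody T; rewrite eA !kpow_mul /M1 char_poly_sim; last first.
- by rewrite -kpow_mul mulmxV // kpow1.
- by rewrite -kpow_mul mulVmx // kpow1.
rewrite -/(M1 _) M1_trig; last exact: kpow_trig.
by congr (_ / _); apply: eq_bigr => i _; rewrite kpow_diag.
Qed.

Section Ineq.
Variable R : numClosedFieldType.

Lemma half_ge (x : R) : 1 / 2 <= x -> 0 <= 2 * x - 1.
Proof.
move=> h; have -> : 2 * x - 1 = 2 * (x - 1 / 2).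
  by rewrite mulrBr mul1r mulfV ?pnatr_eq0.
by apply: mulr_ge0 => //; rewrite subr_ge0.
Qed.

Lemma ineq1 (x t N : R) : 1 / 2 <= x -> 0 <= t -> t <= x * N -> 0 <= N ->
  N * ((1 - x) * N) + t * (t - (1 - x) * N) <= fmap x * (N * N).
Proof.
move=> hx ht htx hN; rewrite -subr_ge0.
have -> : fmap x * (N * N) - (N * ((1 - x) * N) + t * (t - (1 - x) * N))
  = (x * N - t) * ((2 * x - 1) * N + t) by rewrite /fmap; ring.
apply: mulr_ge0; first by rewrite subr_ge0.
by apply: addr_ge0 => //; apply: mulr_ge0 => //; apply: half_ge.
Qed.

Lemma ineq2 (x t c N : R) : 1 / 2 <= x -> x <= 1 -> 0 <= N -> 0 <= t -> t <= x * N ->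
  0 <= c -> c <= (1 - x) * N ->
  N * ((1 - x) * N) + t * (c - (1 - x) * N) + c * (t - (1 - x) * N)
   <= (1 - fmap x) * (N * N).
Proof.
move=> hx hx1 hN ht htx hc hcM; rewrite -subr_ge0.
set M := (1 - x) * N.
have hM : 0 <= M by apply: mulr_ge0 => //; rewrite subr_ge0.
have [le|ge] := orP (real_leVge (ger0_real ht) (ger0_real hM)).
- have -> : (1 - fmap x) * (N * N) - (N * M + t * (c - M) + c * (t - M))
    = M * ((2 * x - 1) * N) + t * (M - c) + c * (M - t) by rewrite /M /fmap; ring.
  apply: addr_ge0; first apply: addr_ge0.
  + by apply: mulr_ge0 => //; apply: mulr_ge0 => //; apply: half_ge.
  + by apply: mulr_ge0; rewrite ?subr_ge0.
  + by apply: mulr_ge0; rewrite ?subr_ge0.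
- have -> : (1 - fmap x) * (N * N) - (N * M + t * (c - M) + c * (t - M))
    = M * (x * N - t) + t * (M - c) + (M - c) * (t - M) by rewrite /M /fmap; ring.
  apply: addr_ge0; first apply: addr_ge0.
  + by apply: mulr_ge0; rewrite ?subr_ge0.
  + by apply: mulr_ge0; rewrite ?subr_ge0.
  + by apply: mulr_ge0; rewrite ?subr_ge0.
Qed.

Lemma fmap_half (x : R) : 1 / 2 <= x -> x <= 1 -> 1 / 2 <= fmap x /\ fmap x <= 1.
Proof.
move=> h1 h2; split.
- rewrite -subr_ge0.
  have -> : fmap x - 1 / 2 = 2 * ((x - 1 / 2) * (x - 1 / 2)).
    by rewrite /fmap; field.
  by apply: mulr_ge0 => //; apply: mulr_ge0; rewrite subr_ge0.
- rewrite -subr_ge0.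
  have -> : 1 - fmap x = 2 * (x * (1 - x)) by rewrite /fmap; ring.
  have x0 : 0 <= x by apply: le_trans h1; rewrite divr_ge0.
  by apply: mulr_ge0 => //; apply: mulr_ge0; rewrite ?subr_ge0.
Qed.

Lemma fmap_lt (a b : R) : 1 / 2 <= a -> a < b -> fmap a < fmap b.
Proof.
move=> ha hab; rewrite -subr_gt0.
have -> : fmap b - fmap a = 2 * ((b - a) * ((a - 1 / 2) + (b - 1 / 2))).
  by rewrite /fmap; field.
apply: mulr_gt0 => //; apply: mulr_gt0; first by rewrite subr_gt0.
apply: ltr_wpDl; first by rewrite subr_ge0.
by rewrite subr_gt0; apply: le_lt_trans hab.
Qed.

End Ineq.

Section Count.
Variable R : numClosedFieldType.
Variable N : nat.
Implicit Types (d : 'I_N -> R) (g : R).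

Lemma cnt_ge0 d g : 0 <= cnt d g.
Proof. by apply: sumr_ge0 => i _; apply: ler0n. Qed.

Lemma cnt_le d g : g != 1 -> cnt d g <= N%:R - cnt d 1.
Proof.
move=> hg; rewrite lerBrDr /cnt -big_split /=.
have -> : (N%:R : R) = \sum_(i < N) 1 by rewrite sumr_const card_ord.
apply: ler_sum => i _.
case: (eqVneq (d i) g) => [->|]; first by rewrite (negbTE hg) addr0.
by rewrite add0r lern1 leq_b1.
Qed.

Lemma hi_un (y : 'I_(N * N)) : kron_hi y = (mxtens_unindex y).1.
Proof. by apply: val_inj. Qed.
Lemma lo_un (y : 'I_(N * N)) : kron_lo y = (mxtens_unindex y).2.
Proof. by apply: val_inj. Qed.

Lemma cnt_pair d g :
  cnt (fun x : 'I_(N * N) => d (kron_hi x) * d (kron_lo x)) g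
  = \sum_(i < N) \sum_(j < N) ((d i * d j == g)%:R).
Proof.
rewrite /cnt pair_big /= (reindex (@mxtens_index N N)) /=; last first.
  by exists (@mxtens_unindex N N) => y _; rewrite (mxtens_indexK, mxtens_unindexK).
by apply: eq_bigr => p _; rewrite hi_un lo_un mxtens_indexK.
Qed.

Lemma cnt_inner d i g : d i != 0 ->
  \sum_(j < N) ((d i * d j == g)%:R) = cnt d (g / d i) :> R.
Proof.
move=> hi; apply: eq_bigr => j _; congr (nat_of_bool _)%:R.
apply/eqP/eqP => [<-|->]; first by rewrite [d i * d j]mulrC mulfK.
by rewrite mulrC divfK.
Qed.


Definition d2 d : 'I_(N * N) -> R := fun x => d (kron_hi x) * d (kron_lo x).

Lemma step1 d x : (forall i, d i != 0) -> 1 / 2 <= x -> x <= 1 ->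
  cnt d 1 <= x * N%:R -> (forall g, g != 1 -> cnt d g <= (1 - x) * N%:R) ->
  cnt (d2 d) 1 <= fmap x * (N * N)%:R.
Proof.
move=> hd hx hx1 ht hM.
set t := cnt d 1; set M := (1 - x) * N%:R.
rewrite /d2 cnt_pair.
under eq_bigr => i _ do rewrite cnt_inner //.
apply: (@le_trans _ _ (\sum_(i < N) (M + (d i == 1)%:R * (t - M)))).
  apply: ler_sum => i _; case: (eqVneq (d i) 1) => [->|ne].
    by rewrite div1r invr1 mul1r addrC subrK.
  by rewrite mul0r addr0 hM // div1r invr_eq1.
rewrite big_split /= sumr_const card_ord -mulr_suml -/(cnt d 1) -/t natrM -[M *+ N]mulr_natl.
apply: ineq1 => //; first exact: cnt_ge0.
Qed.

Lemma step2 d x : (forall i, d i != 0) -> 1 / 2 <= x -> x <= 1 ->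
  cnt d 1 <= x * N%:R -> (forall g, g != 1 -> cnt d g <= (1 - x) * N%:R) ->
  forall g, g != 1 -> cnt (d2 d) g <= (1 - fmap x) * (N * N)%:R.
Proof.
move=> hd hx hx1 ht hM g hg.
set t := cnt d 1; set M := (1 - x) * N%:R; set c := cnt d g.
rewrite /d2 cnt_pair.
under eq_bigr => i _ do rewrite cnt_inner //.
apply: (@le_trans _ _ (\sum_(i < N) (M + (d i == 1)%:R * (c - M) + (d i == g)%:R * (t - M)))).
  apply: ler_sum => i _; case: (eqVneq (d i) 1) => [e1|ne1].
    rewrite e1 eq_sym (negbTE hg) divr1 mul1r mul0r addr0 addrC subrK.
    by [].
  case: (eqVneq (d i) g) => [eg|neg].
    rewrite -eg divff ?hd // mul0r addr0 mul1r addrC subrK.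
    by [].
  rewrite !mul0r !addr0; apply: hM.
  apply: contra neg => /eqP h; apply/eqP.
  by rewrite -[d i]mul1r -h divfK.
rewrite !big_split /= sumr_const card_ord -!mulr_suml -/(cnt d 1) -/(cnt d g) -/t -/c.
rewrite natrM -[M *+ N]mulr_natl.
apply: ineq2 => //; rewrite ?cnt_ge0 //; exact: hM.
Qed.

End Count.
Unset Implicit Arguments.

Theorem mainTheorem12 (R : numClosedFieldType) (n : nat) (A : 'M[R]_n)
  (hA : A \in unitmx)
  (hM : 1 / 2 < M1 A /\ M1 A < 1)
  (c : R) (hc : M1 A < c /\ c < 1) :
  forall m : nat, (1 <= m)%N -> M1 (kpow A m.-1) < iter m.-1 (@fmap R) c.
Proof.
move=> m _; set k := m.-1; clearbody k.
case: hM => hp1 hp2; case: hc => hpc hc1.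
have n0 : (0 < n)%N.
  case: n A hA hp1 {hp2 hpc} => // A _; rewrite /M1 invr0 mulr0.
  move=> h; have := le_lt_trans (divr_ge0 ler01 (ler0n _ 2)) h; by rewrite ltxx.
have [T [hT hM1]] := M1_kpow n0 hA.
set p := M1 A in hp1 hp2 hpc.
have kd0 : forall k, (0 < kdim n k)%N by elim => //= j ih; rewrite muln_gt0 ih.
have hx : forall k, 1 / 2 <= iter k (@fmap R) p /\ iter k (@fmap R) p <= 1.
  elim => [|j [ih1 ih2]] /=; first by split; rewrite ?ltW.
  exact: fmap_half.
have hxy : forall k, iter k (@fmap R) p < iter k (@fmap R) c.
  elim => [|j ih] //=; apply: fmap_lt => //; exact: (hx j).1.
have inv : forall k, (forall i, dg T k i != 0) /\
   cnt (dg T k) 1 <= iter k (@fmap R) p * (kdim n k)%:R /\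
   (forall g, g != 1 -> cnt (dg T k) g <= (1 - iter k (@fmap R) p) * (kdim n k)%:R).
  elim => [|j [ih1 [ih2 ih3]]].
    have ep : cnt (dg T 0) 1 = p * n%:R.
      by rewrite /p (hM1 0) /= mulfVK // pnatr_eq0 -lt0n.
    split => //=; split; first by rewrite ep.
    move=> g hg; apply: le_trans (cnt_le _ hg) _.
    by rewrite ep mulrBl mul1r.
  have [hj1 hj2] := hx j.
  split; first by move=> i /=; rewrite mulf_neq0.
  split; first exact: (step1 ih1 hj1 hj2 ih2 ih3).
  exact: (step2 ih1 hj1 hj2 ih2 ih3).
apply: le_lt_trans (hxy k).
rewrite (hM1 k) ler_pdivrMr ?ltr0n //.
exact: (inv k).2.1.
Qed.
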